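(* Let $n\ge2$ and let $G=(V,E)$ be a $k$-edge-connected graph on $n$ vertices with $k\ge 7\log_2 n$. Then $G$ has a hierarchy $\mathcal T$ that is a $(k/20,1/4,T)$-LCH of $G$, where $T$ is the set of all non-root nodes of $\mathcal T$, and such that for every non-leaf node $t$ of $\mathcal T$ the graph $G\{t\}$ is a $(1/k)$-expander.
   Context: Graphs are finite, undirected, unweighted, loopless, possibly with parallel edges; $k$-edge-connected means every cut $(S,\overline S)$, $\emptyset\ne S\subsetneq V$, has at least $k$ edges (a one-vertex graph counts as $k$-edge-connected). For a graph $H$ and $S\subseteq V(H)$: $\partial_H(S)$ is the number of edges leaving $S$, $d_H(S)$ is the sum of degrees of vertices of $S$, and $\phi(H)=\min_{\emptyset\ne S\subsetneq V(H)}\partial_H(S)/\min\{d_H(S),d_H(V(H)\setminus S)\}$; $H$ is an $\epsilon$-expander if $\phi(H)\ge\epsilon$. A hierarchy of $G$ is a rooted tree $\mathcal T$ in which every non-leaf node has at least two children and whose leaves are in bijection with $V$. For a node $t$: $V(t)$ is the set of vertices at the leaves of its subtree; $E(t)$ the edges inside $V(t)$; $G(t)=(V(t),E(t))$; $\mathcal P(t)=E(V(t),V\setminus V(t))$; for non-root $t$ with parent $t^*$, $\mathcal O(t)=E(V(t),V(t^* )\setminus V(t))$. For $k>0$, $0<\lambda<1$ and a set $T$ of non-root nodes, $\mathcal T$ is a $(k,\lambda,T)$-LCH if $G(t)$ is $k$-edge-connected for all nodes $t$ and $|\mathcal O(t)|\ge\lambda|\mathcal P(t)|$ for all $t\in T$.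 For a non-leaf node $t$ with children $t_1,\dots,t_j$, $G\{t\}$ is the multigraph obtained from $G(t)$ by contracting each $V(t_i)$ into a single vertex and deleting loops. *)

(* Defs.v *)
From mathcomp Require Import all_boot.
From Stdlib Require Import Reals.

Set Implicit Arguments.
Unset Strict Implicit.
Unset Printing Implicit Defensive.

(* A multigraph G = (V,E) is given by finite types V, E and endpoint maps
   src dst : E -> V (looplessness is a hypothesis: src e != dst e). *)

Definition cutE (V E : finType) (src dst : E -> V) (A S : {set V}) : nat :=
  #|[set e : E | [&& src e \in A, dst e \in A & (src e \in S) != (dst e \in S)]]|.

(* G[A] is k-edge-connected: every cut (S, A\S), S nonempty proper, has >= k edges.
   (A one-vertex A is vacuously k-edge-connected.) *)
Definition kEdgeConn (V E : finType) (src dst : E -> V) (k : R) (A : {set V}) : Prop :=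
  forall S : {set V}, S \subset A -> S != set0 -> S != A ->
    Rle k (INR (cutE src dst A S)).

Definition between (V E : finType) (src dst : E -> V) (X Y : {set V}) : nat :=
  #|[set e : E | ((src e \in X) && (dst e \in Y)) || ((src e \in Y) && (dst e \in X))]|.

(* Rooted trees on a finite node type N, given by a parent map. *)
Definition upr (N : finType) (par : N -> option N) : rel N :=
  fun x y => par x == Some y.

Definition children (N : finType) (par : N -> option N) (t : N) : {set N} :=
  [set c | par c == Some t].

Definition is_hierarchy (V N : finType) (par : N -> option N) (lf : V -> N) : Prop :=
  [/\ exists r : N, par r = None /\ (forall u : N, connect (upr par) u r),
      (forall t : N, children par t != set0 -> 1 < #|children par t|),
      injective lf
    & (forall t : N, children par t = set0 <-> exists v : V, lf v = t)].

Definition Vt (V N : finType) (par : N -> option N) (lf : V -> N) (t : N) : {set V} :=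
  [set v | connect (upr par) (lf v) t].

(* Degree in G{t} of the contracted vertex V(c), c a child of t: number of edges of
   G(t) with exactly one end in V(c) (loops of the contraction are deleted). *)
Definition degC (V E N : finType) (src dst : E -> V) (par : N -> option N)
  (lf : V -> N) (t c : N) : nat :=
  cutE src dst (Vt par lf t) (Vt par lf c).

Definition dC (V E N : finType) (src dst : E -> V) (par : N -> option N)
  (lf : V -> N) (t : N) (S : {set N}) : nat :=
  \sum_(c in S) degC src dst par lf t c.

(* partial_{G{t}}(S): edges of G(t) between a child in S and a child not in S,
   i.e. edges of G(t) with exactly one end in the union of the V(c), c in S. *)
Definition bdC (V E N : finType) (src dst : E -> V) (par : N -> option N)
  (lf : V -> N) (t : N) (S : {set N}) : nat :=
  cutE src dst (Vt par lf t) (\bigcup_(c in S) Vt par lf c).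

(* G{t} is an eps-expander: phi(G{t}) >= eps, i.e. for every nonempty proper set S
   of vertices of G{t}, partial(S) / min(d(S), d(complement)) >= eps
   (stated multiplicatively). *)
Definition contr_expander (V E N : finType) (src dst : E -> V) (par : N -> option N)
  (lf : V -> N) (eps : R) (t : N) : Prop :=
  forall S : {set N}, S \subset children par t -> S != set0 -> S != children par t ->
    Rle (eps * INR (minn (dC src dst par lf t S)
                         (dC src dst par lf t (children par t :\: S))))
        (INR (bdC src dst par lf t S)).

(* Main.v *)
Require Import Defs.
From mathcomp Require Import all_boot.
From Stdlib Require Import Reals Lra Lia Classical.
From mathcomp Require Import zify.
Set Implicit Arguments.
Unset Strict Implicit.
Unset Printing Implicit Defensive.


Section Edges.
Variables (V E : finType) (src dst : E -> V).

Definition bd (A : {set V}) := between src dst A (~: A).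

Lemma card_sum (P : pred E) : #|[set e | P e]| = \sum_(e : E) (P e : nat).
Proof.
rewrite -sum1_card big_mkcond /=; apply: eq_bigr => e _; by rewrite inE; case: (P e).
Qed.

Lemma bd_ident (A B : {set V}) : [disjoint A & B] ->
  (bd A + bd B = bd (A :|: B) + 2 * between src dst A B)%N.
Proof.
move=> dAB; rewrite /bd /between !card_sum -big_split /= big_distrr -big_split /=.
apply: eq_bigr => e _; rewrite !inE.
have hs := (disjointFr dAB). 
case sA: (src e \in A); case sB: (src e \in B); case dA: (dst e \in A); case dB: (dst e \in B) => //=;
 try (by rewrite (disjointFr dAB sA) in sB); try (by rewrite (disjointFr dAB dA) in dB).
Qed.

Lemma between_sym (A B : {set V}) : between src dst A B = between src dst B A.
Proof. by rewrite /between; apply: eq_card => e; rewrite !inE orbC. Qed.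

Lemma cutE_between (A S : {set V}) : S \subset A ->
  cutE src dst A S = between src dst S (A :\: S).
Proof.
move=> sSA; rewrite /cutE /between; apply: eq_card => e; rewrite !inE.
case sS: (src e \in S); case dS: (dst e \in S); case sA: (src e \in A); case dA: (dst e \in A) => //=;
 try (by rewrite (subsetP sSA _ sS) in sA); by rewrite (subsetP sSA _ dS) in dA.
Qed.

Lemma cutE_le_bd (A S : {set V}) : (cutE src dst A S <= bd S)%N.
Proof.
rewrite /cutE /bd /between; apply: subset_leq_card; apply/subsetP => e; rewrite !inE.
by case: (src e \in S); case: (dst e \in S); rewrite ?andbF.
Qed.

Lemma cutE_T (S : {set V}) : cutE src dst setT S = bd S.
Proof. by rewrite cutE_between ?subsetT // setTD. Qed.

Lemma bd_T : bd setT = 0%N.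
Proof. rewrite /bd /between setCT; apply/eqP; rewrite cards_eq0; apply/eqP/setP => e; by rewrite !inE !andbF. Qed.

Lemma cutE_mono (A B S : {set V}) : A \subset B ->
  (cutE src dst A (S :&: A) <= cutE src dst B S)%N.
Proof.
move=> sAB; rewrite /cutE; apply: subset_leq_card; apply/subsetP => e; rewrite !inE.
case/and3P=> sa da; rewrite sa da !andbT (subsetP sAB _ sa) (subsetP sAB _ da) //.
Qed.

End Edges.


Lemma ln_le (x y : R) : (0 < x)%R -> (x <= y)%R -> (ln x <= ln y)%R.
Proof. move=> h1 h2; case: (Rle_lt_or_eq_dec _ _ h2) => h. apply: Rlt_le; exact: ln_increasing. rewrite h; lra. Qed.

Section Alpha.
Variables (n : nat) (k : R).
Hypothesis hk : (7 * (ln (INR n) / ln 2) <= k)%R.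
Hypothesis hn : (2 <= n)%N.

Lemma ln2_pos : (0 < ln 2)%R.
Proof. rewrite -ln_1; apply: ln_increasing; lra. Qed.

Lemma INR_pos (a : nat) : (1 <= a)%N -> (1 <= INR a)%R.
Proof. move=> h; have := le_INR 1 a; simpl; apply; apply/leP. done. Qed.

Lemma k_ge7 : (7 <= k)%R.
Proof.
have h2 : (2 <= INR n)%R by have := le_INR 2 n; simpl; apply; apply/leP.
have : (ln 2 <= ln (INR n))%R by apply: ln_le; lra.
have := ln2_pos => p l.
have : (1 <= ln (INR n) / ln 2)%R.
  apply (Rmult_le_reg_r (ln 2)) => //. field_simplify; lra.
lra.
Qed.

Definition alpha (s : nat) : R := (/10 + 2 / k * ((ln (INR n) - ln (INR s)) / ln 2))%R.

Lemma alpha_mono a b : (1 <= a)%N -> (a <= b)%N -> (alpha b <= alpha a)%R.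
Proof.
move=> ha hab; rewrite /alpha.
have k7 := k_ge7; have l2 := ln2_pos.
have : (ln (INR a) <= ln (INR b))%R.
  apply: ln_le; first by have := INR_pos ha; lra. by apply: le_INR; apply/leP.
move=> h.
apply: Rplus_le_compat_l; apply: Rmult_le_compat_l.
  apply: Rlt_le; apply: Rdiv_lt_0_compat; lra.
apply: Rmult_le_compat_r; first by apply: Rlt_le; apply: Rinv_0_lt_compat.
lra.
Qed.

Lemma alpha_half a b : (1 <= a)%N -> (a.*2 <= b)%N -> (alpha b + 2 / k <= alpha a)%R.
Proof.
move=> ha hab; rewrite /alpha.
have k7 := k_ge7; have l2 := ln2_pos.
have : (ln 2 + ln (INR a) <= ln (INR b))%R.
  rewrite -ln_mult; [|lra|have := INR_pos ha; lra].
  apply: ln_le; first by have := INR_pos ha; lra.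
  have -> : (2 * INR a = INR (a.*2))%R by rewrite -mul2n -multE mult_INR.
  by apply: le_INR; apply/leP.
move=> h.
have e : (2 / k * ((ln (INR n) - ln (INR a)) / ln 2) - 2 / k * ((ln (INR n) - ln (INR b)) / ln 2)
   = 2 / k * ((ln (INR b) - ln (INR a)) / ln 2))%R by field; lra.
have : (1 <= (ln (INR b) - ln (INR a)) / ln 2)%R.
  apply (Rmult_le_reg_r (ln 2)) => //. field_simplify; lra.
move=> h1.
have : (2 / k <= 2 / k * ((ln (INR b) - ln (INR a)) / ln 2))%R.
  rewrite -{1}(Rmult_1_r (2/k)); apply: Rmult_le_compat_l => //.
  apply: Rlt_le; apply: Rdiv_lt_0_compat; lra.
lra.
Qed.

Lemma alpha_lo s : (1 <= s)%N -> (s <= n)%N -> (/10 <= alpha s)%R.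
Proof.
move=> h1 h2; rewrite /alpha.
have k7 := k_ge7; have l2 := ln2_pos.
have : (ln (INR s) <= ln (INR n))%R.
  apply: ln_le; first by have := INR_pos h1; lra. by apply: le_INR; apply/leP.
move=> h.
have : (0 <= 2 / k * ((ln (INR n) - ln (INR s)) / ln 2))%R.
  apply: Rmult_le_pos; first by apply: Rlt_le; apply: Rdiv_lt_0_compat; lra.
  apply: Rmult_le_pos; first lra. by apply: Rlt_le; apply: Rinv_0_lt_compat.
lra.
Qed.

Lemma alpha_hi s : (1 <= s)%N -> (alpha s <= /2)%R.
Proof.
move=> h1; rewrite /alpha.
have k7 := k_ge7; have l2 := ln2_pos.
have : (0 <= ln (INR s))%R.
  rewrite -ln_1; apply: ln_le; first lra. exact: INR_pos.
move=> h.
have : ((ln (INR n) - ln (INR s)) / ln 2 <= k / 7)%R.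
  apply (Rmult_le_reg_r (ln 2)) => //. field_simplify; try lra.
  have : (ln (INR n) <= k / 7 * ln 2)%R.
    apply (Rmult_le_reg_r (/ ln 2)); first by apply: Rinv_0_lt_compat.
    field_simplify; lra.
  lra.
move=> h2.
have : (2 / k * ((ln (INR n) - ln (INR s)) / ln 2) <= 2 / k * (k / 7))%R.
  apply: Rmult_le_compat_l => //. apply: Rlt_le; apply: Rdiv_lt_0_compat; lra.
have -> : (2 / k * (k / 7) = 2/7)%R by field; lra.
lra.
Qed.

End Alpha.


Lemma ex_min (T : finType) (Q : {set T} -> Prop) :
  (exists X, Q X) -> exists X, Q X /\ forall Y, Q Y -> (#|X| <= #|Y|)%N.
Proof.
case=> X0 QX0.
suff : forall m (X : {set T}), (#|X| <= m)%N -> Q X -> exists X, Q X /\ forall Y, Q Y -> (#|X| <= #|Y|)%N.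
  by move/(_ _ X0 (leqnn _) QX0).
elim=> [|m IH] X hX QX.
  exists X; split => // Y _; move: hX; rewrite leqn0 => /eqP ->; done.
case: (classic (exists Y, Q Y /\ (#|Y| < #|X|)%N)).
  case=> Y [QY hY]; apply: (IH Y) => //; rewrite -ltnS; exact: leq_trans hY hX.
move=> h; exists X; split => // Y QY; rewrite leqNgt; apply/negP => hl; apply: h; by exists Y.
Qed.

Lemma sum_ge (T : finType) (A : {set T}) (f : T -> nat) (r : R) :
  (forall x, x \in A -> (r <= INR (f x))%R) -> (INR #|A| * r <= INR (\sum_(x in A) f x))%R.
Proof.
move=> h; rewrite -sum1_card.
elim/big_rec2: _ => [|i y1 y2 iA IH]; first by simpl; lra.
rewrite !plus_INR; have := h i iA; simpl; lra.
Qed.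

Section Cover.
Variables (V : finType).
Implicit Types (P X S : {set {set V}}).

Lemma cover_subset S X : S \subset X -> cover S \subset cover X.
Proof. move=> h; apply/subsetP => v /bigcupP[q qS vq]; apply/bigcupP; exists q => //; exact: (subsetP h). Qed.

Lemma coverD P X S : {in P &, forall p q : {set V}, p != q -> [disjoint p & q]} ->
  X \subset P -> S \subset X -> cover (X :\: S) = cover X :\: cover S.
Proof.
move=> dP sXP sSX; apply/setP => v; rewrite inE; apply/bigcupP/andP.
  case=> q; rewrite inE => /andP[qS qX] vq; split; last by apply/bigcupP; exists q.
  apply/negP => /bigcupP[r rS vr].
  have rq : r != q by apply/eqP => e; move: qS; rewrite -e rS.
  have := dP r q (subsetP sXP _ (subsetP sSX _ rS)) (subsetP sXP _ qX) rq.
  by move/disjointFr => /(_ _ vr); rewrite vq.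
case=> nvS /bigcupP[q qX vq]; exists q => //; rewrite inE qX andbT.
apply/negP => qS; move/negP: nvS; apply; apply/bigcupP; by exists q.
Qed.

Lemma coverU P X S : {in P &, forall p q : {set V}, p != q -> [disjoint p & q]} ->
  X \subset P -> S \subset X -> cover S :|: cover (X :\: S) = cover X.
Proof.
move=> dP sXP sSX; rewrite (coverD dP sXP sSX); apply/setP => v; rewrite !inE.
case h: (v \in cover S) => //=; by rewrite (subsetP (cover_subset sSX) _ h).
Qed.

Lemma coverDisj P X S : {in P &, forall p q : {set V}, p != q -> [disjoint p & q]} ->
  X \subset P -> S \subset X -> [disjoint cover S & cover (X :\: S)].
Proof.
move=> dP sXP sSX; rewrite (coverD dP sXP sSX) -setI_eq0; apply/eqP/setP => v; rewrite !inE.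
by case: (v \in cover S); rewrite ?andbF.
Qed.

End Cover.

Section Cluster.
Variables (V E : finType) (src dst : E -> V) (k : R).
Hypothesis hn : (2 <= #|V|)%N.
Hypothesis hk : (7 * (ln (INR #|V|) / ln 2) <= k)%R.
Hypothesis kconn : forall S : {set V}, S != set0 -> S != setT -> (k <= INR (bd src dst S))%R.
Variable P : {set {set V}}.
Hypothesis P0 : set0 \notin P.
Hypothesis Pdisj : {in P &, forall p q : {set V}, p != q -> [disjoint p & q]}.
Hypothesis Pcov : cover P = setT.
Hypothesis P2 : (1 < #|P|)%N.
Implicit Types (X Y S : {set {set V}}) (p q : {set V}).

Local Notation bd := (bd src dst).
Local Notation between := (between src dst).
Definition dsum (X : {set {set V}}) := (\sum_(p in X) bd p)%N.
Local Notation al := (alpha #|V| k).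
Definition Qc (X : {set {set V}}) : Prop := X \subset P /\ X != set0 /\
  (INR (bd (cover X)) <= al #|X| * INR (dsum X) - k/10 * (INR #|X| - 1))%R.

Lemma k7 : (7 <= k)%R.
Proof. exact: k_ge7 hk hn. Qed.

Lemma cardP_le : (#|P| <= #|V|)%N.
Proof.
have hp : partition P [set: V].
  rewrite /partition Pcov eqxx P0 andbT /=; apply/trivIsetP => p q pP qP pq; exact: Pdisj.
rewrite -cardsT (card_partition hp) -sum1_card; apply: leq_sum => p pP.
rewrite card_gt0; case: (p =P set0) => [e|/eqP //]; have := P0; by rewrite -e pP.
Qed.

Lemma part_ne0 p : p \in P -> p != set0.
Proof. move=> pP; case: (p =P set0) => [e|/eqP //]; have := P0; by rewrite -e pP. Qed.

Lemma cover_ne0 X : X \subset P -> X != set0 -> cover X != set0.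
Proof.
move=> sXP /set0Pn[p pX]; have /set0Pn[v vp] := part_ne0 (subsetP sXP _ pX).
apply/set0Pn; exists v; apply/bigcupP; by exists p.
Qed.

Lemma cover_neT X : X \subset P -> X != P -> cover X != setT.
Proof.
move=> sXP XP.
have : ~~ (P \subset X) by apply/negP => h; move/eqP: XP; apply; apply/eqP; rewrite eqEsubset sXP h.
case/subsetPn => p pP pX; have /set0Pn[v vp] := part_ne0 pP.
apply/negP => /eqP e; have : v \in cover X by rewrite e inE.
case/bigcupP => q qX vq.
have qp : q != p by apply/eqP => e'; move: pX; rewrite -e' qX.
have := Pdisj (subsetP sXP _ qX) pP qp; move/disjointFr => /(_ _ vq); by rewrite vp.
Qed.

Lemma part_bd p : p \in P -> (k <= INR (bd p))%R.
Proof.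
move=> pP; apply: kconn; first exact: part_ne0.
have -> : p = cover [set p] by rewrite cover1.
apply: cover_neT; first by rewrite sub1set.
apply/eqP => e; move: P2; by rewrite -e cards1.
Qed.

Lemma QP : Qc P.
Proof.
split; first exact: subxx. split.
  by apply/set0Pn; move/card_gt1P: P2 => -[x [y [xP _ _]]]; exists x.
rewrite Pcov bd_T /=.
have h1 : (INR #|P| * k <= INR (dsum P))%R by apply: sum_ge => x; exact: part_bd.
have h2 : (/10 <= al #|P|)%R by apply: alpha_lo => //; [exact: ltnW|exact: cardP_le].
have h3 : (/10 * INR (dsum P) <= al #|P| * INR (dsum P))%R by apply: Rmult_le_compat_r => //; exact: pos_INR.
change (INR 0) with 0%R; have := k7; move=> hk7. move: h1 h3. set N := INR #|P|. set d := INR (dsum P). set a := al #|P|. move=> h1 h3. lra.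
Qed.

Section Min.
Variable X : {set {set V}}.
Hypothesis QX : Qc X.
Hypothesis Xmin : forall Y, Qc Y -> (#|X| <= #|Y|)%N.

Lemma XP : X \subset P. Proof. by case: QX. Qed.

Lemma nQ Y : Y \subset X -> Y != X -> Y != set0 ->
  (al #|Y| * INR (dsum Y) - k/10 * (INR #|Y| - 1) < INR (bd (cover Y)))%R.
Proof.
move=> sYX YX Y0; apply: Rnot_le_lt => h.
have : Qc Y by split; [exact: subset_trans sYX XP|split].
move/Xmin; rewrite leqNgt; move/negP; apply; apply: proper_card; by rewrite properEneq YX sYX.
Qed.

Lemma X2 : (1 < #|X|)%N.
Proof.
case: QX => sXP [X0 hQ].
rewrite ltnNge; apply/negP => h.
have : #|X| == 1%N by rewrite eqn_leq h card_gt0.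
case/cards1P => p eX; move: hQ; rewrite eX cover1 cards1 /dsum big_set1 /=.
have pP : p \in P by apply: (subsetP sXP); rewrite eX set11.
have hb := part_bd pP.
have ha : (al 1 <= /2)%R by apply: alpha_hi.
have : (al 1 * INR (bd p) <= /2 * INR (bd p))%R by apply: Rmult_le_compat_r => //; exact: pos_INR.
move: hb ha; have := k7. set b := INR (bd p). set a := al 1. move=> *. lra.
Qed.

Lemma splitX S : S \subset X -> S != set0 -> S != X ->
  ((al #|S| - al #|X|) * INR (dsum S) + (al #|X :\: S| - al #|X|) * INR (dsum (X :\: S)) + k/10
    < 2 * INR (between (cover S) (cover (X :\: S))))%R.
Proof.
move=> sSX S0 SX.
have sTX : X :\: S \subset X by apply: subsetDl.
have T0 : X :\: S != set0.
  apply/negP; rewrite setD_eq0 => h; move/eqP: SX; apply; apply/eqP; by rewrite eqEsubset sSX h.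
have TX : X :\: S != X.
  apply/negP => /eqP e; case/set0Pn: S0 => p pS.
  have : p \in X :\: S by rewrite e (subsetP sSX _ pS).
  by rewrite inE pS.
have hS := nQ sSX SX S0.
have hT := nQ sTX TX T0.
have hid := bd_ident src dst (coverDisj Pdisj XP sSX).
rewrite (coverU Pdisj XP sSX) in hid.
case: QX => _ [_ hQ].
have hd : dsum X = (dsum S + dsum (X :\: S))%N by rewrite /dsum (big_setID S) (setIidPr sSX).
have hc : #|X| = (#|S| + #|X :\: S|)%N by rewrite -(cardsID S X) (setIidPr sSX).
move: hQ; rewrite hd hc !plus_INR.
have eI := f_equal INR hid. rewrite -!plusE -!multE !plus_INR in eI. change (INR O) with 0%R in eI.
move: hS hT eI.
set bX := INR (bd (cover X)). set bS := INR (bd (cover S)). set bT := INR (bd (cover (X :\: S))).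
set e := INR (between _ _). set dS := INR (dsum S). set dT := INR (dsum (X :\: S)).
set aS := al #|S|. set aT := al #|X :\: S|. set aX := al #|X|.
set sS := INR #|S|. set sT := INR #|X :\: S|.
rewrite -hc -/aX. 

move=> *. nra.
Qed.

Lemma Xsz S : S \subset X -> S != set0 -> (1 <= #|S|)%N /\ (#|S| <= #|X|)%N.
Proof. move=> h h0; split; [by rewrite card_gt0 | exact: subset_leq_card]. Qed.

Lemma cutX S : S \subset X ->
  cutE src dst (cover X) (cover S) = between (cover S) (cover (X :\: S)).
Proof. move=> h; by rewrite cutE_between ?(cover_subset h) // (coverD Pdisj XP h). Qed.

Lemma compl_props S : S \subset X -> S != set0 -> S != X ->
  [/\ X :\: S \subset X, X :\: S != set0 & X :\: S != X].
Proof.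
move=> sSX S0 SX; split; first exact: subsetDl.
  apply/negP; rewrite setD_eq0 => h; move/eqP: SX; apply; apply/eqP; by rewrite eqEsubset sSX h.
apply/negP => /eqP e; case/set0Pn: S0 => p pS.
have : p \in X :\: S by rewrite e (subsetP sSX _ pS).
by rewrite inE pS.
Qed.

Lemma X_conn S : S \subset X -> S != set0 -> S != X ->
  (k / 20 <= INR (cutE src dst (cover X) (cover S)))%R.
Proof.
move=> sSX S0 SX; have h := splitX sSX S0 SX; rewrite cutX //.
case: (compl_props sSX S0 SX) => sTX T0 TX.
case: (Xsz sSX S0) => s1 s2; case: (Xsz sTX T0) => t1 t2.
have hS : (0 <= (al #|S| - al #|X|) * INR (dsum S))%R.
  apply: Rmult_le_pos; last exact: pos_INR. have := alpha_mono hk hn s1 s2; lra.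
have hT : (0 <= (al #|X :\: S| - al #|X|) * INR (dsum (X :\: S)))%R.
  apply: Rmult_le_pos; last exact: pos_INR. have := alpha_mono hk hn t1 t2; lra.
move: h hS hT; set e := INR _; set u := (_ * _)%R; set w := (_ * INR (dsum _))%R.
move=> *; lra.
Qed.

Lemma X_exp1 S : S \subset X -> S != set0 -> S != X -> (#|S|.*2 <= #|X|)%N ->
  (1 / k * INR (\sum_(C in S) cutE src dst (cover X) C)
     <= INR (cutE src dst (cover X) (cover S)))%R.
Proof.
move=> sSX S0 SX hh; have h := splitX sSX S0 SX; rewrite cutX //.
case: (compl_props sSX S0 SX) => sTX T0 TX.
case: (Xsz sSX S0) => s1 s2; case: (Xsz sTX T0) => t1 t2.
have kk := k7.
have ha := alpha_half hk hn s1 hh.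
have hT : (0 <= (al #|X :\: S| - al #|X|) * INR (dsum (X :\: S)))%R.
  apply: Rmult_le_pos; last exact: pos_INR. have := alpha_mono hk hn t1 t2; lra.
have h2 : (2 / k * INR (dsum S) <= (al #|S| - al #|X|) * INR (dsum S))%R.
  apply: Rmult_le_compat_r; [exact: pos_INR | lra].
have h3 : (INR (\sum_(C in S) cutE src dst (cover X) C) <= INR (dsum S))%R.
  apply: le_INR; apply/leP; apply: leq_sum => C _; exact: cutE_le_bd.
have h4 : (1/k * INR (\sum_(C in S) cutE src dst (cover X) C) <= 1/k * INR (dsum S))%R.
  apply: Rmult_le_compat_l => //; apply: Rlt_le; apply: Rdiv_lt_0_compat; lra.
have e2 : (2 / k * INR (dsum S) = 2 * (1/k * INR (dsum S)))%R by field; lra.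
move: h h2 h4 hT; rewrite e2.
set e := INR (between _ _); set u := (_ * INR (dsum (X :\: S)))%R.
set z := (1/k * INR (dsum S))%R; set y := (_ * INR (dsum S))%R.
set w := (1 / k * _)%R.
move=> *; lra.
Qed.

Lemma X_exp S : S \subset X -> S != set0 -> S != X ->
  (1 / k * INR (minn (\sum_(C in S) cutE src dst (cover X) C)
                     (\sum_(C in X :\: S) cutE src dst (cover X) C))
     <= INR (cutE src dst (cover X) (cover S)))%R.
Proof.
move=> sSX S0 SX.
case: (compl_props sSX S0 SX) => sTX T0 TX.
have hc : #|X| = (#|S| + #|X :\: S|)%N by rewrite -(cardsID S X) (setIidPr sSX).
have kk := k7.
have pos : (0 <= 1/k)%R by apply: Rlt_le; apply: Rdiv_lt_0_compat; lra.
case: (leqP (#|S|.*2) #|X|) => hh.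
- apply: Rle_trans (X_exp1 sSX S0 SX hh); apply: Rmult_le_compat_l => //.
  apply: le_INR; apply/leP; exact: geq_minl.
- have hh' : (#|X :\: S|.*2 <= #|X|)%N.
    move: hh; rewrite hc -!addnn; set a := #|S|; set b := #|X :\: S|; move=> hh; lia.
  have := X_exp1 sTX T0 TX hh'.
  rewrite (cutX sTX) (cutX sSX) between_sym.
  have -> : X :\: (X :\: S) = S by rewrite setDDr setDv set0U (setIidPr sSX).
  move=> H; apply: Rle_trans H; apply: Rmult_le_compat_l => //.
  apply: le_INR; apply/leP; exact: geq_minr.
Qed.

Lemma X_deg p : p \in X -> (bd p <= 4 * between p (cover X :\: p))%N.
Proof.
move=> pX; rewrite leqNgt; apply/negP => h.
set Y := X :\ p.
have sYX : Y \subset X by apply: subsetDl.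
have YX : Y != X by apply/negP => /eqP e; have := pX; rewrite -e /Y !inE eqxx.
have hc : #|X| = (1 + #|Y|)%N by rewrite (cardsD1 p X) pX.
have Y0 : Y != set0.
  by rewrite -card_gt0; have := X2; rewrite hc.
have hY := nQ sYX YX Y0.
have s1 : [set p] \subset X by rewrite sub1set.
have cY : cover Y = cover X :\: p by rewrite /Y (coverD Pdisj XP s1) cover1.
have dj : [disjoint cover Y & p].
  rewrite disjoint_sym; have := coverDisj Pdisj XP s1; by rewrite cover1.
have hid := bd_ident src dst dj.
have cU : cover Y :|: p = cover X by rewrite setUC; have := coverU Pdisj XP s1; rewrite cover1.
rewrite cU in hid.
have eb : between (cover Y) p = between p (cover X :\: p) by rewrite between_sym cY.
rewrite eb in hid.
case: QX => _ [_ hQ].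
have hd : dsum X = (bd p + dsum Y)%N by rewrite /dsum (big_setD1 _ pX).
move: hQ; rewrite hd hc !plus_INR.
have eI := f_equal INR hid. rewrite -!plusE -!multE !plus_INR in eI. change (INR O) with 0%R in eI.
have hlt : (4 * INR (between p (cover X :\: p)) < INR (bd p))%R.
  have := lt_INR _ _ (elimT ltP h). rewrite -multE mult_INR. simpl; lra.
have sz := Xsz sYX Y0; case: sz => y1 y2.
have am := alpha_mono hk hn y1 y2.
have ah : (al #|X| <= /2)%R by apply: alpha_hi => //; rewrite hc.
have m1 : (al #|X| * INR (dsum Y) <= al #|Y| * INR (dsum Y))%R.
  apply: Rmult_le_compat_r => //; exact: pos_INR.
have m2 : (al #|X| * INR (bd p) <= /2 * INR (bd p))%R.
  apply: Rmult_le_compat_r => //; exact: pos_INR.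
have kk := k7.
change (INR 1) with 1%R; move: hY eI hlt m1 m2; rewrite -hc.
set bY := INR (bd (cover Y)); set bp := INR (bd p); set bX := INR (bd (cover X)).
set e := INR (between _ _); set dY := INR (dsum Y); set aX := al #|X|; set aY := al #|Y|.
set sY := INR #|Y|.
move=> *. lra.
Qed.

End Min.

Lemma cluster : exists X, [/\ X \subset P, (1 < #|X|)%N,
  (forall p, p \in X -> (bd p <= 4 * between p (cover X :\: p))%N),
  (forall S, S \subset X -> S != set0 -> S != X ->
     (k / 20 <= INR (cutE src dst (cover X) (cover S)))%R) &
  (forall S, S \subset X -> S != set0 -> S != X ->
  (1 / k * INR (minn (\sum_(C in S) cutE src dst (cover X) C)
                     (\sum_(C in X :\: S) cutE src dst (cover X) C))
     <= INR (cutE src dst (cover X) (cover S)))%R)].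
Proof.
have [X [QX Xmin]] := ex_min (ex_intro _ P QP).
exists X; split.
- exact: XP QX.
- exact: X2 QX.
- move=> p; exact: X_deg QX Xmin p.
- move=> S; exact: X_conn QX Xmin S.
- move=> S; exact: X_exp QX Xmin S.
Qed.

End Cluster.


Section Build.
Variables (V E : finType) (src dst : E -> V) (k : R).
Implicit Types (X Y S P F : {set {set V}}) (A B C D p q x : {set V}).

Definition childF F C B : bool :=
  (C \proper B) && [forall D, (D \in F) ==> (C \proper D) ==> (B \subset D)].
Definition chF F B := [set C in F | childF F C B].
Definition expS B (ch : {set {set V}}) : Prop :=
  forall S, S \subset ch -> S != set0 -> S != ch ->
  (1 / k * INR (minn (\sum_(C in S) cutE src dst B C)
                     (\sum_(C in ch :\: S) cutE src dst B C))
     <= INR (cutE src dst B (cover S)))%R.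

Definition Part P : Prop :=
  [/\ set0 \notin P, {in P &, forall p q : {set V}, p != q -> [disjoint p & q]} & cover P = setT].

Record Good P F : Prop := {
  gT : setT \in F;
  g0 : set0 \notin F;
  gP : P \subset F;
  glam : forall A B, A \in F -> B \in F -> [|| A \subset B, B \subset A | [disjoint A & B]];
  gpart : forall A p, A \in F -> p \in P -> (p \subset A) || [disjoint p & A];
  gconn : forall A, A \in F -> kEdgeConn src dst (k / 20) A;
  gL3 : forall C B, C \in F -> B \in F -> childF F C B ->
          (bd src dst C <= 4 * between src dst C (B :\: C))%N;
  gexp : forall B, B \in F -> expS B (chF F B)
}.

Lemma unionconn P X : {in P &, forall p q : {set V}, p != q -> [disjoint p & q]} ->
  X \subset P -> (forall x, x \in X -> kEdgeConn src dst (k/20) x) ->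
  (forall S, S \subset X -> S != set0 -> S != X ->
     (k / 20 <= INR (cutE src dst (cover X) (cover S)))%R) ->
  kEdgeConn src dst (k/20) (cover X).
Proof.
move=> Pdisj XP xc hX S sS S0 ST.
case: (classic (exists x, [/\ x \in X, S :&: x != set0 & ~~ (x \subset S)])).
  case=> x [xX Sx xS].
  have sx : x \subset cover X by apply/subsetP => v vx; apply/bigcupP; exists x.
  apply: Rle_trans (xc x xX (S :&: x) (subsetIr _ _) Sx _) _.
    apply/negP => /eqP e; move/negP: xS; apply; by rewrite -e subsetIl.
  apply: le_INR; apply/leP; exact: cutE_mono.
move=> hno.
set T := [set x in X | x \subset S].
have cT : cover T = S.
  apply/setP => v; apply/bigcupP/idP.
    by case=> x; rewrite inE => /andP[_ xS] vx; exact: (subsetP xS).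
  move=> vS; have := subsetP sS _ vS; case/bigcupP => x xX vx.
  exists x => //; rewrite inE xX /=.
  case: (boolP (x \subset S)) => // xS; exfalso; apply: hno; exists x; split => //.
  by apply/set0Pn; exists v; rewrite inE vS vx.
have sTX : T \subset X by apply/subsetP => x; rewrite inE => /andP[].
rewrite -cT; apply: hX => //.
  by apply/negP => /eqP e; move: S0; rewrite -cT e /cover big_set0 eqxx.
apply/negP => /eqP e; move: ST; by rewrite -cT e eqxx.
Qed.


Lemma ne_disj_sub A B : A != set0 -> A \subset B -> [disjoint A & B] -> False.
Proof.
case/set0Pn => v vA sAB dAB; have := disjointFr dAB vA; by rewrite (subsetP sAB _ vA).
Qed.

Section Step.
Variables (P X F' : {set {set V}}).
Hypothesis hP : Part P.
Hypothesis XP : X \subset P.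
Hypothesis X2 : (1 < #|X|)%N.
Hypothesis xdeg : forall p, p \in X -> (bd src dst p <= 4 * between src dst p (cover X :\: p))%N.
Hypothesis xexp : expS (cover X) X.
Hypothesis pconn : forall p, p \in P -> kEdgeConn src dst (k/20) p.
Hypothesis cXconn : kEdgeConn src dst (k/20) (cover X).
Let cX := cover X.
Let P' := (P :\: X) :|: [set cX].
Hypothesis G' : Good P' F'.
Let F := F' :|: X.

Lemma Pdisj : {in P &, forall p q : {set V}, p != q -> [disjoint p & q]}.
Proof. by case: hP. Qed.

Lemma x_ne0 x : x \in X -> x != set0.
Proof. move=> xX; case: hP => h _ _; case: (x =P set0) => [e|/eqP //]; by rewrite -e (subsetP XP _ xX) in h. Qed.

Lemma x_sub x : x \in X -> x \subset cX.
Proof. by move=> xX; apply/subsetP => v vx; apply/bigcupP; exists x. Qed.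

Lemma x_disj x y : x \in X -> y \in X -> x != y -> [disjoint x & y].
Proof. move=> xX yX; apply: Pdisj; exact: (subsetP XP). Qed.

Lemma x_proper x : x \in X -> x \proper cX.
Proof.
move=> xX; rewrite properE x_sub //=; apply/negP => h.
have [y [z [yX zX yz]]] := card_gt1P X2.
have : exists2 w, w \in X & w != x.
  case: (y =P x) => [e|/eqP n]; last by exists y.
  exists z => //; by rewrite -e eq_sym.
case=> w wX wx.
apply: (ne_disj_sub (x_ne0 wX) (subset_trans (x_sub wX) h)).
exact: x_disj wX xX wx.
Qed.

Lemma cXP' : cX \in P'.
Proof. by rewrite /P' !inE eqxx orbT. Qed.

Lemma cXF' : cX \in F'.
Proof. exact: (subsetP (gP G') _ cXP'). Qed.

Lemma K1 C x : C \in F' -> x \in X -> ~~ (C \subset x).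
Proof.
move=> CF xX; apply/negP => h.
have := x_proper xX; rewrite properE => /andP[_ nx].
case/orP: (gpart G' CF cXP') => [h1|h1].
  by move/negP: nx; apply; apply: subset_trans h1 h.
apply: (ne_disj_sub (A := C) (B := cX)).
- case: (C =P set0) => [e|/eqP //]; have := g0 G'; by rewrite -e CF.
- exact: subset_trans h (x_sub xX).
- by rewrite disjoint_sym.
Qed.

Lemma K2 C : C \in F' -> C \subset cX -> C = cX.
Proof.
move=> CF h; case/orP: (gpart G' CF cXP') => [h1|h1].
  by apply/eqP; rewrite eqEsubset h h1.
exfalso; apply: (ne_disj_sub (A := C) (B := cX)) => //.
- case: (C =P set0) => [e|/eqP //]; have := g0 G'; by rewrite -e CF.
- by rewrite disjoint_sym.
Qed.

Lemma K3 x B : x \in X -> B \in F' -> x \subset B -> cX \subset B.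
Proof.
move=> xX BF h; case/orP: (gpart G' BF cXP') => // h1; exfalso.
apply: (ne_disj_sub (x_ne0 xX) h).
move: h1; rewrite -!setI_eq0 => /eqP h1; apply/eqP/setP => v; rewrite !inE.
apply/negP => /andP[vx vB]; have : v \in cX :&: B by rewrite inE vB (subsetP (x_sub xX) _ vx).
by rewrite h1 inE.
Qed.

Lemma xnF' x : x \in X -> x \notin F'.
Proof. move=> xX; apply/negP => h; by move/negP: (K1 h xX); apply. Qed.

Lemma CH1 C B : C \in F' -> childF F C B = childF F' C B.
Proof.
move=> CF; rewrite /childF; congr (_ && _); apply/forallP/forallP => h D; have := h D.
  by rewrite /F inE; case: (D \in F') => //=.
rewrite /F inE; case DF: (D \in F') => //= _; apply/implyP => DX; apply/implyP => CD.
by move: CD; rewrite properE => /andP[CD _]; move: (K1 CF DX); rewrite CD.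
Qed.

Lemma CH2 x B : x \in X -> B \in F -> childF F x B = (B == cX).
Proof.
move=> xX; rewrite /F inE => /orP[BF|BX].
  apply/idP/eqP.
    case/andP => xB /forallP /(_ cX); rewrite /F inE cXF' (x_proper xX) /= => BcX.
    exact: K2.
  move=> ->; rewrite /childF x_proper //=; apply/forallP => D; rewrite /F inE.
  apply/implyP => /orP[DF|DX]; apply/implyP => xD.
    by apply: K3 xX DF _; move: xD; rewrite properE => /andP[].
  exfalso; case: (x =P D) => [e|/eqP n]; first by rewrite e properxx in xD.
  apply: (ne_disj_sub (x_ne0 xX) (A := x) (B := D)); first by move: xD; rewrite properE => /andP[].
  exact: x_disj.
have -> : (B == cX) = false.
  by apply/negP => /eqP e; have := xnF' BX; rewrite e cXF'.
apply/negP => /andP[xB _].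
case: (x =P B) => [e|/eqP n]; first by rewrite e properxx in xB.
apply: (ne_disj_sub (x_ne0 xX) (A := x) (B := B)); first by move: xB; rewrite properE => /andP[].
exact: x_disj.
Qed.


Lemma inF A : (A \in F) = (A \in F') || (A \in X).
Proof. by rewrite /F inE. Qed.

Lemma chF_X x : x \in X -> chF F x = set0.
Proof.
move=> xX; apply/setP => C; rewrite !inE; apply/negP => /andP[CF ch].
move: CF => /orP[CF|CX].
  move: ch; rewrite CH1 // => /andP[h _]; move: h; rewrite properE => /andP[h _].
  by move: (K1 CF xX); rewrite h.
move: ch; rewrite CH2 //; last by rewrite inF xX orbT.
move=> /eqP e; have := x_proper xX; by rewrite e properxx.
Qed.

Lemma chF_cX : chF F cX = X.
Proof.
apply/setP => C; rewrite !inE.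
case CF: (C \in F') => /=.
  rewrite CH1 //.
  have -> : (C \in X) = false by apply/negP => CX; have := xnF' CX; rewrite CF.
  apply/negP => /andP[h _]; move: h; rewrite properEneq => /andP[ne sub].
  by rewrite (K2 CF sub) eqxx in ne.
case CX: (C \in X) => //=; by rewrite CH2 // ?eqxx // inF cXF' .
Qed.

Lemma chF_other B : B \in F' -> B != cX -> chF F B = chF F' B.
Proof.
move=> BF BcX; apply/setP => C; rewrite !inE.
case CF: (C \in F') => /=; first by rewrite CH1.
case CX: (C \in X) => //=; rewrite CH2 //; last by rewrite inF BF.
exact/negbTE.
Qed.

Lemma GoodF : Good P F.
Proof.
have PF' := gP G'.
split.
- by rewrite inF (gT G').
- rewrite inF (negbTE (g0 G')) /=; apply/negP => h; by move/eqP: (x_ne0 h).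
- apply/subsetP => p pP; rewrite inF; case pX: (p \in X); rewrite ?orbT //.
  by rewrite (subsetP PF') // /P' !inE pX pP.
- move=> A B; rewrite !inF => /orP[AF|AX] /orP[BF|BX].
  + exact (glam G' AF BF).
  + case/orP: (gpart G' AF cXP') => h.
      by rewrite (subset_trans (x_sub BX) h) orbT.
    by rewrite disjoint_sym (disjointWl (x_sub BX) h) !orbT.
  + case/orP: (gpart G' BF cXP') => h.
      by rewrite (subset_trans (x_sub AX) h).
    by rewrite (disjointWl (x_sub AX) h) !orbT.
  + case: (A =P B) => [->|/eqP n]; first by rewrite subxx.
    by rewrite (x_disj AX BX n) !orbT.
- move=> A p; rewrite inF => /orP[AF|AX] pP.
    case pX: (p \in X).
      case/orP: (gpart G' AF cXP') => h.
        by rewrite (subset_trans (x_sub pX) h).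
      by rewrite (disjointWl (x_sub pX) h) orbT.
    by apply: (gpart G' AF); rewrite /P' !inE pX pP.
  case: (p =P A) => [->|/eqP n]; first by rewrite subxx.
  by rewrite (Pdisj pP (subsetP XP _ AX) n) orbT.
- move=> A; rewrite inF => /orP[AF|AX]; first exact (gconn G' AF).
  by apply: pconn; exact: (subsetP XP).
- move=> C B; rewrite !inF => /orP[CF|CX] BF.
    rewrite CH1 // => ch; case/orP: BF => [BF|BX]; first exact (gL3 G' CF BF ch).
    exfalso; move: ch => /andP[h _]; move: h; rewrite properE => /andP[h _].
    by move: (K1 CF BX); rewrite h.
  rewrite CH2 //; last by rewrite inF.
  by move/eqP => ->; apply: xdeg.
- move=> B; rewrite inF => /orP[BF|BX].
    case: (B =P cX) => [->|/eqP n]; first by rewrite chF_cX.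
    rewrite chF_other //; exact (gexp G' BF).
  rewrite chF_X // => S sS S0; exfalso; move/negP: S0; apply.
  by rewrite -subset0.
Qed.

End Step.
End Build.

Section BuildInd.
Variables (V E : finType) (src dst : E -> V) (k : R).
Hypothesis hn : (2 <= #|V|)%N.
Hypothesis hk : (7 * (ln (INR #|V|) / ln 2) <= k)%R.
Hypothesis kconn : forall S : {set V}, S != set0 -> S != setT -> (k <= INR (bd src dst S))%R.
Implicit Types (X Y S P F : {set {set V}}) (A B C D p q x : {set V}).

Lemma base P : Part P -> (#|P| <= 1)%N -> (forall p, p \in P -> kEdgeConn src dst (k/20) p) ->
  exists F, Good src dst k P F.
Proof.
case=> P0 Pdisj Pcov h1 pc.
have PT : P = [set setT].
  have : #|P| == 1%N.
    rewrite eqn_leq h1 card_gt0; apply/negP => /eqP e.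
    have : cover P = set0 by rewrite e /cover big_set0.
    case/card_gt0P: (ltnW hn) => v _.
    rewrite Pcov => /setP /(_ v); by rewrite !inE.
  case/cards1P => p e; move: Pcov; rewrite e cover1 => ->; done.
have npr : forall A B, A \in P -> B \in P -> ~~ (A \proper B).
  by move=> A B; rewrite PT !inE => /eqP eA /eqP eB; by rewrite eA eB properxx.
have ch0 : forall B, B \in P -> chF P B = set0.
  move=> B BP; apply/setP => C; rewrite !inE; apply/negP => /andP[CP /andP[h _]].
  by move: (npr _ _ CP BP); rewrite h.
exists P; constructor.
- by rewrite PT inE.
- exact: P0.
- exact: subxx.
- move=> A B; rewrite PT !inE => /eqP eA /eqP eB; by rewrite eA eB subxx.
- move=> A p; rewrite PT !inE => /eqP eA /eqP eB; by rewrite eA eB subxx.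
- move=> A AP; exact (pc A AP).
- move=> C B CP BP /andP[h _]; by move: (npr _ _ CP BP); rewrite h.
- move=> B BP; rewrite ch0 // => S sS S0; exfalso; move/negP: S0; apply; by rewrite -subset0.
Qed.

Lemma cover_setU1 Q A : cover (Q :|: [set A]) = cover Q :|: A.
Proof. by rewrite /cover bigcup_setU -/(cover [set A]) cover1. Qed.

Lemma build m P : (#|P| <= m)%N -> Part P -> (forall p, p \in P -> kEdgeConn src dst (k/20) p) ->
  exists F, Good src dst k P F.
Proof.
elim: m P => [|m IH] P hm hP pc.
  by apply: base => //; apply: leq_trans hm _.
case: (leqP #|P| 1) => h1; first exact: base.
have [P0 Pdisj Pcov] := hP.
have [X [XP X2 xdeg xconn xexp]] := cluster hn hk kconn P0 Pdisj Pcov h1.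
set cX := cover X.
set P' := (P :\: X) :|: [set cX].
have cXne : cX != set0.
  apply: cover_ne0 P0 _ XP _; by rewrite -card_gt0 ltnW.
have djq : forall q, q \in P -> q \notin X -> [disjoint cX & q].
  move=> q qP qX; rewrite -setI_eq0; apply/eqP/setP => v; rewrite !inE.
  apply/negP => /andP[/bigcupP[x xX vx] vq].
  have xq : x != q by apply/eqP => e; move: qX; rewrite -e xX.
  have := Pdisj x q (subsetP XP _ xX) qP xq; move/disjointFr => /(_ _ vx); by rewrite vq.
have hP' : Part P'.
  split.
  - rewrite !inE negb_or; apply/andP; split; first by rewrite negb_and P0 orbT.
    by rewrite eq_sym.
  - move=> p q; rewrite !inE => /orP[/andP[pX pP]|/eqP->] /orP[/andP[qX qP]|/eqP->] pq.
    + exact: Pdisj.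
    + by rewrite disjoint_sym; apply: djq.
    + exact: djq.
    + by rewrite eqxx in pq.
  - by rewrite cover_setU1 setUC /cX (coverU Pdisj (subxx P) XP).
have hcard : (#|P'| <= m)%N.
  have h3 := cardsU (P :\: X) [set cX]; rewrite cards1 (cardsDS XP) in h3.
  have h4 := subset_leq_card XP.
  rewrite /P' h3; lia.
have xc : forall x, x \in X -> kEdgeConn src dst (k/20) x by move=> x xX; apply: pc; exact: (subsetP XP).
have cXc : kEdgeConn src dst (k/20) cX by apply: unionconn Pdisj XP xc xconn.
have pc' : forall p, p \in P' -> kEdgeConn src dst (k/20) p.
  move=> p; rewrite !inE => /orP[/andP[_ pP]|/eqP ->]; [exact: pc | exact: cXc].
have [F' G'] := IH P' hcard hP' pc'.
exists (F' :|: X); apply: GoodF hP XP X2 xdeg xexp pc G'.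
Qed.

End BuildInd.


Lemma imsetD_inj (aT rT : finType) (f : aT -> rT) (A B : {set aT}) :
  injective f -> f @: (A :\: B) = f @: A :\: f @: B.
Proof.
move=> fi; apply/setP => y; rewrite inE; apply/imsetP/andP.
  case=> x; rewrite inE => /andP[xB xA] ->; rewrite (mem_imset _ _ fi) xB (mem_imset _ _ fi) xA; done.
case=> nB /imsetP [x xA ey]; exists x => //; rewrite inE xA andbT; move: nB; by rewrite ey (mem_imset _ _ fi).
Qed.

Section Hier.
Variables (V : finType) (F : {set {set V}}).
Hypothesis FT : setT \in F.
Hypothesis F0 : set0 \notin F.
Hypothesis F1 : forall v, [set v] \in F.
Hypothesis Flam : forall A B, A \in F -> B \in F -> [|| A \subset B, B \subset A | [disjoint A & B]].

Definition NN := {A : {set V} | A \in F}.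
Implicit Types (t u w c : NN).
Definition parN (t : NN) : option NN := [pick u : NN | childF F (val t) (val u)].
Definition lfN (v : V) : NN := exist _ [set v] (F1 v).

Lemma ne0F A : A \in F -> A != set0.
Proof. move=> AF; case: (A =P set0) => [e|/eqP //]; by move: F0; rewrite -e AF. Qed.

Lemma childF_uniq C B1 B2 : B1 \in F -> B2 \in F -> childF F C B1 -> childF F C B2 -> B1 = B2.
Proof.
move=> B1F B2F /andP[p1 /forallP h1] /andP[p2 /forallP h2].
have := h1 B2; rewrite B2F p2 /= => s12.
have := h2 B1; rewrite B1F p1 /= => s21.
by apply/eqP; rewrite eqEsubset s12 s21.
Qed.

Lemma par_some t u : parN t = Some u <-> childF F (val t) (val u).
Proof.
rewrite /parN; case: pickP => [x hx|h]; split => //.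
- by case=> <-.
- move=> hu; congr Some; apply: val_inj; apply: (childF_uniq (valP x) (valP u) hx hu).
- by move=> hu; have := h u; rewrite hu.
Qed.

Lemma exists_parent C : C \in F -> C != setT -> exists2 B, B \in F & childF F C B.
Proof.
move=> CF CT.
have ex : exists D, D \in F /\ C \proper D.
  exists setT; split => //; rewrite properEneq CT subsetT //.
have [B [[BF CB] Bmin]] := ex_min ex.
exists B => //; rewrite /childF CB /=; apply/forallP => D; apply/implyP => DF; apply/implyP => CD.
case/or3P: (Flam BF DF) => h.
- exact: h.
- have := Bmin D (conj DF CD) => c.
  have : D == B by rewrite eqEcard h c.
  by move/eqP => ->.
- exfalso; move: CB CD; rewrite !properE => /andP[cb _] /andP[cd _].
  apply: (ne_disj_sub (ne0F CF) cb).
  by rewrite disjoint_sym; exact: (disjointWr cd h).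
Qed.

Lemma par_none t : parN t = None <-> val t = setT.
Proof.
split.
  move=> h; case: (val t =P setT) => // n.
  have [B BF cb] := exists_parent (valP t) (introN eqP n).
  by have := proj2 (par_some t (exist _ B BF)) cb; rewrite h.
move=> e; case h: (parN t) => [u|] //.
move/par_some: h => /andP[p _]; move: p; by rewrite e properE !subsetT andbF.
Qed.

Lemma par_proper t u : parN t = Some u -> val t \proper val u.
Proof. by move/par_some => /andP[]. Qed.

Lemma conn_sub u w : connect (upr parN) u w -> val u \subset val w.
Proof.
case/connectP => p; elim: p u => [|y p IH] u /=; first by move=> _ ->.
case/andP => /eqP h pth e; apply: subset_trans (IH y pth e).
by move: (par_proper h); rewrite properE => /andP[].
Qed.

Lemma sub_conn u w : val u \subset val w -> connect (upr parN) u w.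
Proof.
move: u.
suff : forall n u, (#|val w| - #|val u| <= n)%N -> val u \subset val w -> connect (upr parN) u w.
  by move=> H u h; apply: (H _ u (leqnn _) h).
elim=> [|n IH] u hm su.
  have : val u == val w by rewrite eqEcard su; move: hm; rewrite leqn0 subn_eq0.
  by move/eqP/val_inj => ->; exact: connect0.
case: (val u =P val w) => [/val_inj ->|ne]; first exact: connect0.
have uT : val u != setT.
  apply/negP => /eqP e; apply: ne; apply/eqP; rewrite eqEsubset su e subsetT //.
have [B BF cb] := exists_parent (valP u) uT.
set y : NN := exist _ B BF.
have py : parN u = Some y by apply/par_some.
have yw : val y \subset val w.
  case/andP: cb => _ /forallP /(_ (val w)); rewrite (valP w) /= properEneq su andbT.
  by move/implyP; apply; apply/eqP.
apply: connect_trans (connect1 _) (IH y _ yw); first by rewrite /upr py.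
have := par_proper py; rewrite properEcard => /andP[_ lt].
have := subset_leq_card yw; have := subset_leq_card su; lia.
Qed.

Lemma Vt_val t : Vt parN lfN t = val t.
Proof.
apply/setP => v; rewrite inE; apply/idP/idP.
  by move/conn_sub; rewrite /= sub1set.
by move=> vt; apply: sub_conn; rewrite /= sub1set.
Qed.

Lemma childcover t v : v \in val t -> val t != [set v] -> exists c, parN c = Some t /\ v \in val c.
Proof.
move=> vt tv.
suff : forall n u, (#|val t| - #|val u| <= n)%N -> v \in val u -> val u \proper val t ->
   exists c, parN c = Some t /\ v \in val c.
  move/(_ _ (lfN v) (leqnn _)); apply; first by rewrite /= inE.
  by rewrite /= properEneq eq_sym tv sub1set.
elim=> [|n IH] u hm vu ut.
  exfalso; move: ut; rewrite properEcard => /andP[_]; move: hm; rewrite leqn0 subn_eq0; lia.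
have uT : val u != setT.
  apply/negP => /eqP e; move: ut; by rewrite e properE subsetT /= andbF.
have [B BF cb] := exists_parent (valP u) uT.
set y : NN := exist _ B BF.
have py : parN u = Some y by apply/par_some.
have yt : val y \subset val t.
  case/andP: cb => _ /forallP /(_ (val t)); rewrite (valP t) /= ut /=.
  by move=> hh; exact: hh.
case: (val y =P val t) => [/val_inj e|ne].
  by exists u; rewrite py e.
apply: (IH y).
- have := par_proper py; rewrite properEcard => /andP[_ lt].
  have := subset_leq_card yt; move: hm; lia.
- have := par_proper py; rewrite properE => /andP[s _]; exact: (subsetP s).
- by rewrite properEneq yt andbT; apply/eqP.
Qed.

Lemma hier : is_hierarchy parN lfN.
Proof.
split.
- exists (exist _ setT FT); split; first exact/par_none.
  move=> u; apply: sub_conn; exact: subsetT.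
- move=> t /set0Pn [c]; rewrite inE => /eqP pc.
  have := par_proper pc; rewrite properE => /andP[s /subsetPn [v vt vc]].
  have tv : val t != [set v].
    apply/negP => /eqP e; have /set0Pn [w wc] := ne0F (valP c).
    have : w \in val t by exact: (subsetP s).
    rewrite e inE => /eqP ew; by rewrite -ew wc in vc.
  have [c' [pc' vc']] := childcover vt tv.
  apply/card_gt1P; exists c, c'; split; rewrite ?inE ?pc ?pc' //.
  by apply/eqP => e; rewrite e vc' in vc.
- by move=> v w /(congr1 val) /set1_inj.
- move=> t; split.
    move=> h; have /set0Pn [v vt] := ne0F (valP t).
    case: (val t =P [set v]) => [e|/eqP ne].
      by exists v; apply: val_inj; rewrite e.
    have [c [pc _]] := childcover vt ne.
    by move: h => /setP /(_ c); rewrite !inE pc eqxx.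
  case=> v <-; apply/setP => c; rewrite !inE; apply/negP => /eqP pc.
  have := par_proper pc; rewrite properEneq => /andP[ne s].
  have := ne0F (valP c); move: s ne; rewrite subset1.
  case/orP => /eqP ->; by rewrite eqxx.
Qed.

End Hier.


Lemma set1_ne0 (T : finType) (v : T) : [set v] != set0.
Proof. by apply/set0Pn; exists v; rewrite inE. Qed.

Theorem mainTheorem8 (V E : finType) (src dst : E -> V) (k : R) :
  (forall e : E, src e != dst e) ->
  (2 <= #|V|)%N ->
  kEdgeConn src dst k [set: V] ->
  (7 * (ln (INR #|V|) / ln 2) <= k)%R ->
  exists (N : finType) (par : N -> option N) (lf : V -> N),
    [/\ is_hierarchy par lf,
        (forall t : N, kEdgeConn src dst (k / 20) (Vt par lf t)),
        (forall t p : N, par t = Some p ->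
           (/ 4 * INR (between src dst (Vt par lf t) (~: Vt par lf t))
              <= INR (between src dst (Vt par lf t) (Vt par lf p :\: Vt par lf t)))%R)
      & (forall t : N, children par t != set0 -> contr_expander src dst par lf (1 / k) t)].
Proof.
move=> _ hn hG hk.
have kconn : forall S : {set V}, S != set0 -> S != setT -> (k <= INR (bd src dst S))%R.
  by move=> S S0 ST; rewrite -cutE_T; apply: hG => //; exact: subsetT.
set P0 := [set [set v] | v in [set: V]].
have hP0 : Part P0.
  split.
  - apply/imsetP => -[v _ e]; by move: (set1_ne0 v); rewrite -e eqxx.
  - move=> p q /imsetP [v _ ->] /imsetP [w _ ->] ne.
    rewrite -setI_eq0; apply/eqP/setP => x; rewrite !inE.
    apply/negP => /andP[/eqP e1 /eqP e2]; move: ne; by rewrite -e1 -e2 eqxx.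
  - apply/setP => v; rewrite inE; apply/bigcupP; exists [set v]; rewrite ?inE //.
    by apply: imset_f.
have pc : forall p, p \in P0 -> kEdgeConn src dst (k/20) p.
  move=> p /imsetP [v _ ->] S; rewrite subset1 => /orP[/eqP ->|/eqP ->]; first by rewrite eqxx.
  by rewrite eqxx.
have [F G] := build hn hk kconn (leqnn _) hP0 pc.
have F1 : forall v, [set v] \in F.
  move=> v; apply: (subsetP (gP G)); by apply: imset_f.
have FT := gT G.
have F0 := g0 G.
have Flam := glam G.
exists (NN F), (@parN _ F), (lfN F1).
have Vv : forall t, Vt (@parN _ F) (lfN F1) t = val t by move=> t; apply: Vt_val.
split.
- exact: hier.
- move=> t; rewrite Vv; exact (gconn G (valP t)).
- move=> t p /par_some h; rewrite !Vv.
  have := gL3 G (valP t) (valP p) h => h'.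
  have := le_INR _ _ (elimT leP h'); rewrite -multE mult_INR.
  replace (INR 4) with 4%R by (simpl; lra).
  rewrite /bd; move=> *. lra.
- move=> t ch0 S sS S0 SC.
  have chN : val @: children (@parN _ F) t = chF F (val t).
    apply/setP => C; apply/imsetP/idP.
      case=> c; rewrite inE => /eqP /par_some h ->; by rewrite inE (valP c) h.
    rewrite inE => /andP[CF h]; exists (exist _ C CF) => //; rewrite inE; apply/eqP/par_some; exact: h.
  have eD : forall S' : {set NN F}, (\sum_(c in S') degC src dst (@parN _ F) (lfN F1) t c)%N
        = (\sum_(C in val @: S') cutE src dst (val t) C)%N.
    move=> S'; rewrite big_imset /=; last by move=> x y _ _; apply: val_inj.
    by apply: eq_bigr => c _; rewrite /degC !Vv.
  have eB : bdC src dst (@parN _ F) (lfN F1) t S = cutE src dst (val t) (cover (val @: S)).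
    rewrite /bdC Vv cover_imset; congr cutE; apply: eq_bigr => c _; exact: Vv.
  rewrite /dC !eD eB imsetD_inj; last exact: val_inj.
  rewrite chN; apply: (gexp G (valP t)).
  + by rewrite -chN; exact: imsetS.
  + by rewrite imset_eq0.
  + rewrite -chN; apply/negP => /eqP e; move/negP: SC; apply; apply/eqP; exact: (imset_inj val_inj e).
Qed.
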